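(* Let $(A,\rhd,\lhd,\succ,\prec)$ be a finite-dimensional pre-dual pre-Poisson algebra with sub-adjacent dual pre-Poisson algebra $(A,\circ,[\cdot,\cdot])$, where $x\circ y=x\rhd y+x\lhd y$ and $[x,y]=x\succ y+x\prec y$. Let $\{e_1,\dots,e_n\}$ be a basis of $A$ and $\{e_1^*,\dots,e_n^*\}$ its dual basis. Let $\hat A=A\oplus A^*$ with operations $$(x+a^* )\circ(y+b^* )=x\circ y-L_{\rhd}^*(x)b^*+(-L_{\rhd}^*+R_{\lhd}^* )(y)a^*,$$ $$[x+a^*,y+b^*]=[x,y]+L_{\succ}^*(x)b^*-(L_{\succ}^*+R_{\prec}^* )(y)a^*,$$ for $x,y\in A$, $a^*,b^*\in A^*$ (this is a dual pre-Poisson algebra). Then $r=\sum_{i=1}^n(e_i\otimes e_i^*+e_i^*\otimes e_i)$ is a symmetric solution of the permutative-Leibniz Yang–Baxter equation in $\hat A$.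
   Context: Field $\mathbb{F}$ of characteristic $0$. For a bilinear operation $\diamond$, $L_\diamond(x)y=x\diamond y$, $R_\diamond(x)y=y\diamond x$; for $f:A\to\mathrm{End}(V)$ the dual $f^*:A\to\mathrm{End}(V^* )$ is $\langle f^*(x)v^*,u\rangle=-\langle v^*,f(x)u\rangle$. A pre-dual pre-Poisson algebra is a vector space $A$ with bilinear operations $\rhd,\lhd,\succ,\prec$ such that for all $x,y,z$: $x\lhd(y\lhd z+y\rhd z)=(x\lhd y)\lhd z=(y\rhd x)\lhd z=y\rhd(x\lhd z)$; $x\rhd(y\rhd z)=(x\lhd y+x\rhd y)\rhd z=(y\lhd x+y\rhd x)\rhd z$; $(x\prec y+x\succ y)\succ z=x\succ(y\succ z)-y\succ(x\succ z)$; $(x\succ y)\prec z=-(y\prec x)\prec z$; $x\prec(y\prec z+y\succ z)=(x\prec y)\prec z+y\succ(x\prec z)$; $x\prec(y\rhd z+y\lhd z)=(x\prec y)\lhd z+y\rhd(x\prec z)$; $x\succ(y\lhd z)=(x\succ y)\lhd z+y\lhd(x\succ z+x\prec z)$; $x\succ(y\rhd z)=(x\succ y+x\prec y)\rhd z+y\rhd(x\succ z)$; $(x\lhd y)\prec z=x\lhd(y\succ z+y\prec z)+y\rhd(x\prec z)$; $(x\rhd y+x\lhd y)\succ z=x\rhd(y\succ z)+y\rhd(x\succ z)$; $(x\rhd y-y\lhd x)\prec z=0$; $(x\succ y+y\prec x)\lhd z=0$; $(x\succ y+x\prec y+y\succ x+y\prec x)\rhd z=0$. A dual pre-Poisson algebra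 $(B,\circ,[\cdot,\cdot])$: $x\circ(y\circ z)=(x\circ y)\circ z=(y\circ x)\circ z$; $[x,[y,z]]=[[x,y],z]+[y,[x,z]]$; $[x,y\circ z]=[x,y]\circ z+y\circ[x,z]$; $[x\circ y,z]=x\circ[y,z]+y\circ[x,z]$; $[x,y]\circ z=-[y,x]\circ z$. PLYBE in a dual pre-Poisson algebra $B$: with $x\blacksquare y=x\circ y-y\circ x$, $x\square y=[x,y]+[y,x]$ and $r=\sum_i a_i\otimes b_i\in B\otimes B$, set $\mathbf{P}(r)=\sum_{i,j}\big(a_i\otimes a_j\otimes b_i\circ b_j-a_i\otimes b_i\circ a_j\otimes b_j+a_i\blacksquare a_j\otimes b_j\otimes b_i\big)$ and $\mathbf{L}(r)=\sum_{i,j}\big(a_i\otimes a_j\otimes[b_i,b_j]+a_i\otimes[b_i,a_j]\otimes b_j-a_i\square a_j\otimes b_i\otimes b_j\big)$; $r$ is a solution if $\mathbf{P}(r)=\mathbf{L}(r)=0$. Symmetric means invariant under the flip $u\otimes v\mapsto v\otimes u$. *)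

(* Defs.v *)
(* Coordinates: a finite-dimensional space of dimension m over F
   is 'rV[F]_m; tensors in V(x)V(x)V are given by their coordinate arrays. *)
From HB Require Import structures.
From mathcomp Require Import all_boot all_order all_algebra.
Set Implicit Arguments. Unset Strict Implicit. Unset Printing Implicit Defensive.
Import Order.TTheory GRing.Theory Num.Theory.
Local Open Scope ring_scope.

Section Defs.
Variable F : fieldType.

Definition bilinear_op (m : nat) (f : 'rV[F]_m -> 'rV[F]_m -> 'rV[F]_m) : Prop :=
  (forall (c : F) x y z, f (c *: x + y) z = c *: f x z + f y z) /\
  (forall (c : F) x y z, f z (c *: x + y) = c *: f z x + f z y).

Definition pre_dual_pre_Poisson (n : nat)
  (rhd lhd succ prec : 'rV[F]_n -> 'rV[F]_n -> 'rV[F]_n) : Prop :=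
  [/\ bilinear_op rhd, bilinear_op lhd, bilinear_op succ, bilinear_op prec &
  forall x y z,
  (lhd x (lhd y z + rhd y z) = lhd (lhd x y) z
      /\ lhd (lhd x y) z = lhd (rhd y x) z
      /\ lhd (rhd y x) z = rhd y (lhd x z)) /\
      (rhd x (rhd y z) = rhd (lhd x y + rhd x y) z
      /\ rhd (lhd x y + rhd x y) z = rhd (lhd y x + rhd y x) z) /\
      (succ (prec x y + succ x y) z = succ x (succ y z) - succ y (succ x z)) /\
      (prec (succ x y) z = - prec (prec y x) z) /\
      (prec x (prec y z + succ y z) = prec (prec x y) z + succ y (prec x z)) /\
      (prec x (rhd y z + lhd y z) = lhd (prec x y) z + rhd y (prec x z)) /\
      (succ x (lhd y z) = lhd (succ x y) z + lhd y (succ x z + prec x z)) /\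
      (succ x (rhd y z) = rhd (succ x y + prec x y) z + rhd y (succ x z)) /\
      (prec (lhd x y) z = lhd x (succ y z + prec y z) + rhd y (prec x z)) /\
      (succ (rhd x y + lhd x y) z = rhd x (succ y z) + rhd y (succ x z)) /\
      (prec (rhd x y - lhd y x) z = 0) /\
      (lhd (succ x y + prec y x) z = 0) /\
      (rhd (succ x y + prec x y + succ y x + prec y x) z = 0)].

(* natural pairing between A^* = 'rV_n and A = 'rV_n *)
Definition pairing (n : nat) (a x : 'rV[F]_n) : F := \sum_(j < n) a 0 j * x 0 j.

Definition stdv (n : nat) (j : 'I_n) : 'rV[F]_n := delta_mx 0 j.

(* dual map of L_op: <L^*(x) a, u> = - <a, x op u> *)
Definition Ldual (n : nat) (op : 'rV[F]_n -> 'rV[F]_n -> 'rV[F]_n) (x a : 'rV[F]_n)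
  : 'rV[F]_n := \row_j (- pairing a (op x (stdv j))).
(* dual map of R_op: <R^*(x) a, u> = - <a, u op x> *)
Definition Rdual (n : nat) (op : 'rV[F]_n -> 'rV[F]_n -> 'rV[F]_n) (x a : 'rV[F]_n)
  : 'rV[F]_n := \row_j (- pairing a (op (stdv j) x)).

(* hat A = A (+) A^*, an element x + a^* is row_mx x a *)
Definition inA (n : nat) (x : 'rV[F]_n) : 'rV[F]_(n + n) := row_mx x 0.
Definition inAs (n : nat) (a : 'rV[F]_n) : 'rV[F]_(n + n) := row_mx 0 a.

Definition hat_circ (n : nat) (rhd lhd : 'rV[F]_n -> 'rV[F]_n -> 'rV[F]_n)
  (u v : 'rV[F]_(n + n)) : 'rV[F]_(n + n) :=
  let x := lsubmx u in let a := rsubmx u in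
  let y := lsubmx v in let b := rsubmx v in
  row_mx (rhd x y + lhd x y)
         (- Ldual rhd x b + (- Ldual rhd y a + Rdual lhd y a)).

Definition hat_br (n : nat) (succ prec : 'rV[F]_n -> 'rV[F]_n -> 'rV[F]_n)
  (u v : 'rV[F]_(n + n)) : 'rV[F]_(n + n) :=
  let x := lsubmx u in let a := rsubmx u in
  let y := lsubmx v in let b := rsubmx v in
  row_mx (succ x y + prec x y)
         (Ldual succ x b - (Ldual succ y a + Rdual prec y a)).

Definition tens3 (m : nat) (u v w : 'rV[F]_m) (p q s : 'I_m) : F :=
  u 0 p * v 0 q * w 0 s.

(* P(r) and L(r) for r = sum_(i in I) a i (x) b i, as coordinate arrays *)
Definition PLYBE_P (m : nat) (I : finType) (circ : 'rV[F]_m -> 'rV[F]_m -> 'rV[F]_m)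
  (a b : I -> 'rV[F]_m) (p q s : 'I_m) : F :=
  \sum_(i : I) \sum_(j : I)
    (tens3 (a i) (a j) (circ (b i) (b j)) p q s
     - tens3 (a i) (circ (b i) (a j)) (b j) p q s
     + tens3 (circ (a i) (a j) - circ (a j) (a i)) (b j) (b i) p q s).

Definition PLYBE_L (m : nat) (I : finType) (br : 'rV[F]_m -> 'rV[F]_m -> 'rV[F]_m)
  (a b : I -> 'rV[F]_m) (p q s : 'I_m) : F :=
  \sum_(i : I) \sum_(j : I)
    (tens3 (a i) (a j) (br (b i) (b j)) p q s
     + tens3 (a i) (br (b i) (a j)) (b j) p q s
     - tens3 (br (a i) (a j) + br (a j) (a i)) (b i) (b j) p q s).

Definition is_PLYBE_solution (m : nat) (I : finType)
  (circ br : 'rV[F]_m -> 'rV[F]_m -> 'rV[F]_m) (a b : I -> 'rV[F]_m) : Prop :=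
  forall p q s, PLYBE_P circ a b p q s = 0 /\ PLYBE_L br a b p q s = 0.

Definition tensor_symmetric (m : nat) (I : finType) (a b : I -> 'rV[F]_m) : Prop :=
  forall p q : 'I_m, \sum_(i : I) a i 0 p * b i 0 q = \sum_(i : I) b i 0 p * a i 0 q.

(* the family defining r = sum_i (e_i (x) e_i^* + e_i^* (x) e_i) *)
Definition r_left (n : nat) (E D : 'M[F]_n) (k : 'I_n + 'I_n) : 'rV[F]_(n + n) :=
  match k with inl i => inA (row i E) | inr i => inAs (row i D) end.
Definition r_right (n : nat) (E D : 'M[F]_n) (k : 'I_n + 'I_n) : 'rV[F]_(n + n) :=
  match k with inl i => inAs (row i D) | inr i => inA (row i E) end.

End Defs.

(* Main.v *)
Require Import Defs.
From HB Require Import structures.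
From mathcomp Require Import all_boot all_order all_algebra.
From mathcomp Require Import ring.
Import GRing.Theory.
Local Open Scope ring_scope.
Set Implicit Arguments. Unset Strict Implicit. Unset Printing Implicit Defensive.

Section Aux.
Variable F : fieldType.

Definition linF m (f : 'rV[F]_m -> F) := forall c x y, f (c *: x + y) = c * f x + f y.

Lemma linF0 m (f : 'rV[F]_m -> F) : linF f -> f 0 = 0.
Proof. move=> h; have := h (-1) 0 0; rewrite scaleN1r oppr0 addr0 mulN1r addNr. by []. Qed.

Lemma linF_sum m (f : 'rV[F]_m -> F) (hf : linF f) (I : finType) (c : I -> F) (v : I -> 'rV[F]_m) :
  f (\sum_i c i *: v i) = \sum_i c i * f (v i).
Proof.
apply: (big_rec2 (fun a b => f b = a)) => [|i a b _ <-]; first exact: linF0.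
by rewrite hf.
Qed.

Lemma expand m (f : 'rV[F]_m -> F) (hf : linF f) x : f x = \sum_p x 0 p * f (stdv F p).
Proof. by rewrite {1}(row_sum_delta x) linF_sum. Qed.

Lemma contract m (I J : finType) (H : 'rV[F]_m -> 'rV[F]_m -> F)
  (hl : forall y c x x', H (c *: x + x') y = c * H x y + H x' y)
  (hr : forall x c y y', H x (c *: y + y') = c * H x y + H x y')
  (a b : I -> 'rV[F]_m) (a' b' : J -> 'rV[F]_m)
  (ht : forall p q, \sum_i a i 0 p * b i 0 q = \sum_j a' j 0 p * b' j 0 q) :
  \sum_i H (a i) (b i) = \sum_j H (a' j) (b' j).
Proof.
have e x y : H x y = \sum_p \sum_q (x 0 p * y 0 q) * H (stdv F p) (stdv F q).
  have hx : linF (fun x => H x y) by move=> ???; apply: hl.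
  rewrite (expand hx x); apply: eq_bigr => p _.
  have hy : linF (fun y => H (stdv F p) y) by move=> ???; apply: hr.
  rewrite (expand hy y) mulr_sumr; apply: eq_bigr => q _; ring.
have sf (K : finType) (u v : K -> 'rV[F]_m) : \sum_k H (u k) (v k) =
   \sum_p \sum_q (\sum_k u k 0 p * v k 0 q) * H (stdv F p) (stdv F q).
  rewrite (eq_bigr (fun k => \sum_p \sum_q (u k 0 p * v k 0 q) * H (stdv F p) (stdv F q)));
    last by move=> k _; apply: e.
  rewrite exchange_big; apply: eq_bigr => p _; rewrite exchange_big; apply: eq_bigr => q _.
  by rewrite mulr_suml.
rewrite !sf; apply: eq_bigr => p _; apply: eq_bigr => q _; by rewrite ht.
Qed.

Lemma reduce4 m (I J : finType) (G : 'rV[F]_m -> 'rV[F]_m -> 'rV[F]_m -> 'rV[F]_m -> F)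
  (h1 : forall c x x' y z w, G (c *: x + x') y z w = c * G x y z w + G x' y z w)
  (h2 : forall c x y y' z w, G x (c *: y + y') z w = c * G x y z w + G x y' z w)
  (h3 : forall c x y z z' w, G x y (c *: z + z') w = c * G x y z w + G x y z' w)
  (h4 : forall c x y z w w', G x y z (c *: w + w') = c * G x y z w + G x y z w')
  (a b : I -> 'rV[F]_m) (a' b' : J -> 'rV[F]_m)
  (ht : forall p q, \sum_i a i 0 p * b i 0 q = \sum_j a' j 0 p * b' j 0 q) :
  \sum_i \sum_j G (a i) (b i) (a j) (b j) = \sum_i \sum_j G (a' i) (b' i) (a' j) (b' j).
Proof.
have s1 : \sum_i \sum_j G (a i) (b i) (a j) (b j) = \sum_i \sum_j G (a i) (b i) (a' j) (b' j).
  apply: eq_bigr => i _.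
  have hl : forall y c x x', G (a i) (b i) (c *: x + x') y = c * G (a i) (b i) x y + G (a i) (b i) x' y.
    by move=> y c x x'; apply: h3.
  have hr : forall x c y y', G (a i) (b i) x (c *: y + y') = c * G (a i) (b i) x y + G (a i) (b i) x y'.
    by move=> x c y y'; apply: h4.
  exact: (contract (H := fun z w => G (a i) (b i) z w) hl hr ht).
rewrite s1 exchange_big [RHS]exchange_big; apply: eq_bigr => j _.
have hl : forall y c x x', G (c *: x + x') y (a' j) (b' j) = c * G x y (a' j) (b' j) + G x' y (a' j) (b' j).
  by move=> y c x x'; apply: h1.
have hr : forall x c y y', G x (c *: y + y') (a' j) (b' j) = c * G x y (a' j) (b' j) + G x y' (a' j) (b' j).
  by move=> x c y y'; apply: h2.
exact: (contract (H := fun x y => G x y (a' j) (b' j)) hl hr ht).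
Qed.


Section Ops.
Variable n : nat.
Local Notation V := 'rV[F]_n.
Local Notation std := (@stdv F n).

Lemma cD m (u v : 'rV[F]_m) j : (u + v) 0 j = u 0 j + v 0 j. Proof. by rewrite mxE. Qed.
Lemma cN m (u : 'rV[F]_m) j : (- u) 0 j = - u 0 j. Proof. by rewrite mxE. Qed.
Lemma cZ m c (u : 'rV[F]_m) j : (c *: u) 0 j = c * u 0 j. Proof. by rewrite mxE. Qed.
Lemma c0 m j : (0 : 'rV[F]_m) 0 j = 0. Proof. by rewrite mxE. Qed.
Lemma cL (op : V -> V -> V) x a j : Ldual op x a 0 j = - pairing a (op x (std j)).
Proof. by rewrite mxE. Qed.
Lemma cR (op : V -> V -> V) x a j : Rdual op x a 0 j = - pairing a (op (std j) x).
Proof. by rewrite mxE. Qed.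
Lemma stdvE (i p : 'I_n) : std i 0 p = (i == p)%:R.
Proof. by rewrite /stdv mxE eqxx eq_sym. Qed.

Lemma pairing_linl c (a a' x : V) : pairing (c *: a + a') x = c * pairing a x + pairing a' x.
Proof. rewrite /pairing mulr_sumr -big_split /=; apply: eq_bigr => j _; rewrite !mxE; ring. Qed.
Lemma pairing_linr c (a x x' : V) : pairing a (c *: x + x') = c * pairing a x + pairing a x'.
Proof. rewrite /pairing mulr_sumr -big_split /=; apply: eq_bigr => j _; rewrite !mxE; ring. Qed.
Lemma pairing0l (x : V) : pairing 0 x = 0.
Proof. by rewrite /pairing big1 // => j _; rewrite mxE mul0r. Qed.
Lemma pairing0r (x : V) : pairing x 0 = 0.
Proof. by rewrite /pairing big1 // => j _; rewrite mxE mulr0. Qed.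
Lemma pairing_std (j : 'I_n) (x : V) : pairing (std j) x = x 0 j.
Proof.
rewrite /pairing (bigD1 j) //= big1 ?addr0; first by rewrite stdvE eqxx mul1r.
by move=> i /negbTE h; rewrite stdvE eq_sym h mul0r.
Qed.

Variable op : V -> V -> V.
Hypothesis hop : bilinear_op op.

Lemma opl c x x' y : op (c *: x + x') y = c *: op x y + op x' y.
Proof. by case: hop => h _; apply: h. Qed.
Lemma opr c x y y' : op x (c *: y + y') = c *: op x y + op x y'.
Proof. by case: hop => _ h; apply: h. Qed.
Lemma op0x y : op 0 y = 0.
Proof. have := opl (-1) 0 0 y; rewrite !scaleN1r oppr0 addr0 addNr. by []. Qed.
Lemma opx0 x : op x 0 = 0.
Proof. have := opr (-1) x 0 0; rewrite !scaleN1r oppr0 addr0 addNr. by []. Qed.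

Lemma Ldual_linx c x x' a : Ldual op (c *: x + x') a = c *: Ldual op x a + Ldual op x' a.
Proof. apply/rowP => j; rewrite !mxE opl pairing_linr; ring. Qed.
Lemma Ldual_lina c x a a' : Ldual op x (c *: a + a') = c *: Ldual op x a + Ldual op x a'.
Proof. apply/rowP => j; rewrite !mxE pairing_linl; ring. Qed.
Lemma Rdual_linx c x x' a : Rdual op (c *: x + x') a = c *: Rdual op x a + Rdual op x' a.
Proof. apply/rowP => j; rewrite !mxE opr pairing_linr; ring. Qed.
Lemma Rdual_lina c x a a' : Rdual op x (c *: a + a') = c *: Rdual op x a + Rdual op x a'.
Proof. apply/rowP => j; rewrite !mxE pairing_linl; ring. Qed.

End Ops.

Lemma lsub_lin n c (u v : 'rV[F]_(n + n)) : lsubmx (c *: u + v) = c *: lsubmx u + lsubmx v.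
Proof. by rewrite linearD linearZ. Qed.
Lemma rsub_lin n c (u v : 'rV[F]_(n + n)) : rsubmx (c *: u + v) = c *: rsubmx u + rsubmx v.
Proof. by rewrite linearD linearZ. Qed.


Lemma splitC m n (P : 'I_(m + n)) : (exists p, P = lshift n p) \/ (exists p, P = rshift m p).
Proof. rewrite -(splitK P); case: (split P) => p; [left|right]; by exists p. Qed.

Lemma sum_pick n (f : 'I_n -> F) p : (forall i, i != p -> f i = 0) -> \sum_i f i = f p.
Proof. by move=> h; rewrite (bigD1 p) //= big1 ?addr0 // => i /h. Qed.

Lemma sum2_splitP (I : finType) (A B C : I -> I -> F) :
  \sum_i \sum_j (A i j - B i j + C i j) = \sum_i \sum_j A i j - \sum_i \sum_j B i j + \sum_i \sum_j C i j.
Proof.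
rewrite -sumrB -big_split /=; apply: eq_bigr => i _.
by rewrite -sumrB -big_split.
Qed.
Lemma sum2_splitL (I : finType) (A B C : I -> I -> F) :
  \sum_i \sum_j (A i j + B i j - C i j) = \sum_i \sum_j A i j + \sum_i \sum_j B i j - \sum_i \sum_j C i j.
Proof.
rewrite -big_split -sumrB /=; apply: eq_bigr => i _.
by rewrite -big_split -sumrB.
Qed.

Section Sums.
Variable n : nat.
Variables (u v : 'I_n -> F) (C : 'I_n -> 'I_n -> F) (a b : 'I_n).
Hypotheses (hu : forall i, u i = (i == a)%:R) (hv : forall j, v j = (j == b)%:R).

Lemma sd (f : 'I_n -> F) : \sum_i (i == a)%:R * f i = f a.
Proof.
rewrite (bigD1 a) //= eqxx mul1r big1 ?addr0 // => i /negbTE ->; by rewrite mul0r.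
Qed.
Lemma sdb (f : 'I_n -> F) : \sum_i (i == b)%:R * f i = f b.
Proof.
rewrite (bigD1 b) //= eqxx mul1r big1 ?addr0 // => i /negbTE ->; by rewrite mul0r.
Qed.

Lemma S1 : \sum_i \sum_j u i * v j * C i j = C a b.
Proof.
rewrite (sum_pick (p:=a)) => [|i hi]; last first.
  by apply: big1 => j _; rewrite hu (negbTE hi) mulr0n; ring.
rewrite (sum_pick (p:=b)) => [|j hj]; last by rewrite hv (negbTE hj) mulr0n; ring.
rewrite hu hv !eqxx !mulr1n; ring.
Qed.
Lemma S2 : \sum_i \sum_j u i * C i j * v j = C a b.
Proof.
rewrite (sum_pick (p:=a)) => [|i hi]; last first.
  by apply: big1 => j _; rewrite hu (negbTE hi) mulr0n; ring.
rewrite (sum_pick (p:=b)) => [|j hj]; last by rewrite hv (negbTE hj) mulr0n; ring.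
rewrite hu hv !eqxx !mulr1n; ring.
Qed.
Lemma S3 : \sum_i \sum_j C i j * v j * u i = C a b.
Proof.
rewrite (sum_pick (p:=a)) => [|i hi]; last first.
  by apply: big1 => j _; rewrite hu (negbTE hi) mulr0n; ring.
rewrite (sum_pick (p:=b)) => [|j hj]; last by rewrite hv (negbTE hj) mulr0n; ring.
rewrite hu hv !eqxx !mulr1n; ring.
Qed.
Lemma S4 : \sum_i \sum_j C i j * u i * v j = C a b.
Proof.
rewrite (sum_pick (p:=a)) => [|i hi]; last first.
  by apply: big1 => j _; rewrite hu (negbTE hi) mulr0n; ring.
rewrite (sum_pick (p:=b)) => [|j hj]; last by rewrite hv (negbTE hj) mulr0n; ring.
rewrite hu hv !eqxx !mulr1n; ring.
Qed.
End Sums.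

Section SumsZ.
Variable n : nat.
Variables (u v : 'I_n -> F) (C : 'I_n -> 'I_n -> F).
Hypothesis h : (forall i, u i = 0) \/ (forall j, v j = 0).
Lemma S1z : \sum_i \sum_j u i * v j * C i j = 0.
Proof. apply: big1 => i _; apply: big1 => j _; case: h => ->; ring. Qed.
Lemma S2z : \sum_i \sum_j u i * C i j * v j = 0.
Proof. apply: big1 => i _; apply: big1 => j _; case: h => ->; ring. Qed.
Lemma S3z : \sum_i \sum_j C i j * v j * u i = 0.
Proof. apply: big1 => i _; apply: big1 => j _; case: h => ->; ring. Qed.
Lemma S4z : \sum_i \sum_j C i j * u i * v j = 0.
Proof. apply: big1 => i _; apply: big1 => j _; case: h => ->; ring. Qed.
End SumsZ.

Lemma rowI n (i : 'I_n) : row i (1%:M : 'M[F]_n) = stdv F i.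
Proof. by rewrite row1. Qed.

Lemma tensor_key n (E D : 'M[F]_n) p q : \sum_i E i p * D i q = (E^T *m D) p q.
Proof. by rewrite mxE; apply: eq_bigr => i _; rewrite mxE. Qed.

Lemma rowE m n (A : 'M[F]_(m, n)) i j : (row i A) 0 j = A i j.
Proof. by rewrite mxE. Qed.

Lemma tensor_key2 n (E D : 'M[F]_n) p q : \sum_i D i p * E i q = (E^T *m D) q p.
Proof. by rewrite mxE; apply: eq_bigr => i _; rewrite mxE mulrC. Qed.

Lemma rtens n (E D : 'M[F]_n) (h : E^T *m D = 1%:M) P Q :
  \sum_k r_left E D k 0 P * r_right E D k 0 Q =
  \sum_k r_left 1%:M 1%:M k 0 P * r_right 1%:M 1%:M k 0 Q.
Proof.
have h1 : (1%:M : 'M[F]_n)^T *m 1%:M = 1%:M by rewrite trmx1 mul1mx.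
case: (splitC P) => -[p ->]; case: (splitC Q) => -[q ->]; rewrite !big_sumType /=;
  under eq_bigr => i _ do rewrite /inA /inAs ?row_mxEl ?row_mxEr ?c0 ?mul0r ?mulr0 ?rowE;
  under [X in _ + X = _]eq_bigr => i _ do rewrite /inA /inAs ?row_mxEl ?row_mxEr ?c0 ?mul0r ?mulr0 ?rowE;
  under [X in _ = X + _]eq_bigr => i _ do rewrite /inA /inAs ?row_mxEl ?row_mxEr ?c0 ?mul0r ?mulr0 ?rowE;
  under [X in _ = _ + X]eq_bigr => i _ do rewrite /inA /inAs ?row_mxEl ?row_mxEr ?c0 ?mul0r ?mulr0 ?rowE;
  rewrite ?big1_eq ?(tensor_key2 E D) ?(tensor_key E D) ?tensor_key ?h ?h1 ?mxE;
  first [done | by rewrite eq_sym].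
Qed.


Section Main.
Variable n : nat.
Local Notation V := 'rV[F]_n.
Local Notation W := 'rV[F]_(n + n).
Variables rhd lhd succ prec : V -> V -> V.
Hypotheses (hr : bilinear_op rhd) (hl : bilinear_op lhd) (hs : bilinear_op succ) (hp : bilinear_op prec).

Lemma hcE x a y b : hat_circ rhd lhd (row_mx x a) (row_mx y b) =
  row_mx (rhd x y + lhd x y) (- Ldual rhd x b + (- Ldual rhd y a + Rdual lhd y a)).
Proof. by rewrite /hat_circ !row_mxKl !row_mxKr. Qed.
Lemma hbE x a y b : hat_br succ prec (row_mx x a) (row_mx y b) =
  row_mx (succ x y + prec x y) (Ldual succ x b - (Ldual succ y a + Rdual prec y a)).
Proof. by rewrite /hat_br !row_mxKl !row_mxKr. Qed.

Lemma hc_linl c (u u' v : W) :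
  hat_circ rhd lhd (c *: u + u') v = c *: hat_circ rhd lhd u v + hat_circ rhd lhd u' v.
Proof.
rewrite -[u]hsubmxK -[u']hsubmxK -[v]hsubmxK scale_row_mx add_row_mx !hcE.
rewrite (opl hr) (opl hl) (Ldual_linx hr) (Ldual_lina rhd) (Rdual_lina lhd).
rewrite scale_row_mx add_row_mx; congr row_mx; apply/rowP => j; rewrite !(cD, cN, cZ); ring.
Qed.
Lemma hc_linr c (u v v' : W) :
  hat_circ rhd lhd u (c *: v + v') = c *: hat_circ rhd lhd u v + hat_circ rhd lhd u v'.
Proof.
rewrite -[u]hsubmxK -[v']hsubmxK -[v]hsubmxK scale_row_mx add_row_mx !hcE.
rewrite (opr hr) (opr hl) (Ldual_linx hr) (Ldual_lina rhd) (Rdual_linx hl).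
rewrite scale_row_mx add_row_mx; congr row_mx; apply/rowP => j; rewrite !(cD, cN, cZ); ring.
Qed.
Lemma hb_linl c (u u' v : W) :
  hat_br succ prec (c *: u + u') v = c *: hat_br succ prec u v + hat_br succ prec u' v.
Proof.
rewrite -[u]hsubmxK -[u']hsubmxK -[v]hsubmxK scale_row_mx add_row_mx !hbE.
rewrite (opl hs) (opl hp) (Ldual_linx hs) (Ldual_lina succ) (Rdual_lina prec).
rewrite scale_row_mx add_row_mx; congr row_mx; apply/rowP => j; rewrite !(cD, cN, cZ); ring.
Qed.
Lemma hb_linr c (u v v' : W) :
  hat_br succ prec u (c *: v + v') = c *: hat_br succ prec u v + hat_br succ prec u v'.
Proof.
rewrite -[u]hsubmxK -[v']hsubmxK -[v]hsubmxK scale_row_mx add_row_mx !hbE.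
rewrite (opr hs) (opr hp) (Ldual_linx hs) (Ldual_lina succ) (Rdual_linx hp).
rewrite scale_row_mx add_row_mx; congr row_mx; apply/rowP => j; rewrite !(cD, cN, cZ); ring.
Qed.


Lemma P_reduce (E D : 'M[F]_n) (h : E^T *m D = 1%:M) P Q S :
  PLYBE_P (hat_circ rhd lhd) (r_left E D) (r_right E D) P Q S =
  PLYBE_P (hat_circ rhd lhd) (r_left 1%:M 1%:M) (r_right 1%:M 1%:M) P Q S.
Proof.
rewrite /PLYBE_P.
apply: (reduce4 (G := fun x y z w => tens3 x z (hat_circ rhd lhd y w) P Q S
   - tens3 x (hat_circ rhd lhd y z) w P Q S
   + tens3 (hat_circ rhd lhd x z - hat_circ rhd lhd z x) w y P Q S)).
- by move=> *; rewrite /tens3 /= !(hc_linl, hc_linr) !(cD, cN, cZ); ring.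
- by move=> *; rewrite /tens3 /= !(hc_linl, hc_linr) !(cD, cN, cZ); ring.
- by move=> *; rewrite /tens3 /= !(hc_linl, hc_linr) !(cD, cN, cZ); ring.
- by move=> *; rewrite /tens3 /= !(hc_linl, hc_linr) !(cD, cN, cZ); ring.
- exact: rtens.
Qed.

Lemma L_reduce (E D : 'M[F]_n) (h : E^T *m D = 1%:M) P Q S :
  PLYBE_L (hat_br succ prec) (r_left E D) (r_right E D) P Q S =
  PLYBE_L (hat_br succ prec) (r_left 1%:M 1%:M) (r_right 1%:M 1%:M) P Q S.
Proof.
rewrite /PLYBE_L.
apply: (reduce4 (G := fun x y z w => tens3 x z (hat_br succ prec y w) P Q S
   + tens3 x (hat_br succ prec y z) w P Q S
   - tens3 (hat_br succ prec x z + hat_br succ prec z x) y w P Q S)).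
- by move=> *; rewrite /tens3 /= !(hb_linl, hb_linr) !(cD, cN, cZ); ring.
- by move=> *; rewrite /tens3 /= !(hb_linl, hb_linr) !(cD, cN, cZ); ring.
- by move=> *; rewrite /tens3 /= !(hb_linl, hb_linr) !(cD, cN, cZ); ring.
- by move=> *; rewrite /tens3 /= !(hb_linl, hb_linr) !(cD, cN, cZ); ring.
- exact: rtens.
Qed.


Ltac simps := rewrite /tens3 /inA /inAs ?cD ?cN ?rowI ?hcE ?hbE ?row_mxEl ?row_mxEr ?cD ?cN ?cL ?cR
  ?(op0x hr) ?(op0x hl) ?(op0x hs) ?(op0x hp) ?(opx0 hr) ?(opx0 hl) ?(opx0 hs) ?(opx0 hp)
  ?c0 ?pairing_std ?pairing0l ?pairing0r ?c0 ?stdvE ?eqxx ?mulr1n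
  ?mul0r ?mulr0 ?add0r ?addr0 ?oppr0 ?subr0 ?sub0r.

Ltac coordtac := let i := fresh "i" in move=> i; cbv beta;
  rewrite /inA /inAs ?rowI ?row_mxEl ?row_mxEr ?stdvE ?c0.
Ltac zt := first [left; by coordtac | right; by coordtac].

Ltac dsum p q s := first [
   rewrite (@S1 _ _ _ _ p q); [|by coordtac|by coordtac]
 | rewrite S1z; [|zt]
 | rewrite (@S2 _ _ _ _ p s); [|by coordtac|by coordtac]
 | rewrite S2z; [|zt]
 | rewrite (@S3 _ _ _ _ s q); [|by coordtac|by coordtac]
 | rewrite S3z; [|zt]
 | rewrite (@S4 _ _ _ _ q s); [|by coordtac|by coordtac]
 | rewrite S4z; [|zt] ].

Lemma P_std P Q S :
  PLYBE_P (hat_circ rhd lhd) (r_left 1%:M 1%:M) (r_right 1%:M 1%:M) P Q S = 0.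
Proof.
rewrite /PLYBE_P /tens3; under eq_bigr => k _ do rewrite big_sumType.
rewrite big_sumType !big_split /= !sum2_splitP.
case: (splitC P) => -[p ->]; case: (splitC Q) => -[q ->]; case: (splitC S) => -[s ->].
all: repeat dsum p q s.
all: simps; simps; simps.
all: ring.
Qed.

Lemma L_std P Q S :
  PLYBE_L (hat_br succ prec) (r_left 1%:M 1%:M) (r_right 1%:M 1%:M) P Q S = 0.
Proof.
rewrite /PLYBE_L /tens3; under eq_bigr => k _ do rewrite big_sumType.
rewrite big_sumType !big_split /= !sum2_splitL.
case: (splitC P) => -[p ->]; case: (splitC Q) => -[q ->]; case: (splitC S) => -[s ->].
all: repeat dsum p q s.
all: simps; simps; simps.
all: ring.
Qed.

End Main.
End Aux.

Unset Implicit Arguments.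

Theorem corollary3p31 (F : fieldType) (hchar : [pchar F] =i pred0) (n : nat)
  (rhd lhd succ prec : 'rV[F]_n -> 'rV[F]_n -> 'rV[F]_n)
  (hA : pre_dual_pre_Poisson rhd lhd succ prec)
  (E D : 'M[F]_n) (hE : E \in unitmx)
  (hD : forall i j : 'I_n, pairing (row i D) (row j E) = (i == j)%:R) :
  tensor_symmetric (r_left E D) (r_right E D) /\
  is_PLYBE_solution (hat_circ rhd lhd) (hat_br succ prec) (r_left E D) (r_right E D).
Proof.
case: hA => hr hl hs hp _.
have hDE : D *m E^T = 1%:M.
  apply/matrixP => i j; rewrite !mxE -hD /pairing; apply: eq_bigr => k _; by rewrite !mxE.
have hED : E^T *m D = 1%:M by apply: mulmx1C.
split.
  by move=> p q; rewrite !big_sumType /= addrC.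
move=> P Q S; split.
  by rewrite (P_reduce hr hl hED) P_std.
by rewrite (L_reduce hs hp hED) L_std.
Qed.
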